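(* Let $X$ be a regular topological space, let $\mathcal A(X)$ be a maximal strongly disjoint family of nonempty, regular open, $\varrho$-homogeneous subsets of $X$, and for $H\in\mathrm{RO}(X)$ let $\mathrm{tr}_X(H)=\{A\in\mathcal A(X): A\cap H\neq\emptyset\}$. Then for each $H\in\mathrm{RO}(X)$: (1) $\rho(H)=\prod\{\rho(A): A\in\mathrm{tr}_X(H)\}$; (2) $\rho(H)\ge 2^{|\mathrm{tr}_X(H)|}$; (3) $|\{B\in\mathrm{RO}(X): \mathrm{tr}_X(B)\subseteq\mathrm{tr}_X(H)\}|\le\rho(H)$.
   Context: $\mathrm{RO}(G)$ denotes the family of regular open subsets of an open set $G$ and $\rho(G)=|\mathrm{RO}(G)|$. An open set $A$ (as a subspace) is $\varrho$-homogeneous if $\rho(B)=\rho(A)$ for every nonempty regular open $B$ of $A$. A family $\mathcal E$ of subsets of $X$ is strongly disjoint if $\overline{E_0}\cap\overline{E_1}=\emptyset$ for all distinct $E_0,E_1\in\mathcal E$. *)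

(* Defs.v *)
From HB Require Import structures.
From mathcomp Require Import all_boot all_order all_algebra.
From mathcomp Require Import all_classical all_reals all_analysis.

Set Implicit Arguments.
Unset Strict Implicit.
Unset Printing Implicit Defensive.

Local Open Scope classical_set_scope.

Section Defs.
Context {X : topologicalType}.

Definition rel_closure (G B : set X) : set X := G `&` closure B.

Definition rel_interior (G S : set X) : set X :=
  [set x | G x /\ exists U : set X, [/\ open U, U x & U `&` G `<=` S]].

Definition RO (G : set X) : set (set X) :=
  [set B | B `<=` G /\ B = rel_interior G (rel_closure G B)].

(* A is rho-homogeneous: rho(B) = rho(A) for all nonempty B in RO(A) *)
Definition rho_homogeneous (A : set X) : Prop :=
  forall B, RO A B -> B !=set0 -> (RO B #= RO A)%card.

Definition strongly_disjoint (E : set (set X)) : Prop :=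
  forall E0 E1, E E0 -> E E1 -> E0 <> E1 -> closure E0 `&` closure E1 = set0.

Definition admissible_family (F : set (set X)) : Prop :=
  strongly_disjoint F /\
  (forall A, F A -> [/\ A !=set0, RO setT A & rho_homogeneous A]).

Definition maximal_admissible_family (F : set (set X)) : Prop :=
  admissible_family F /\
  (forall F', admissible_family F' -> F `<=` F' -> F' = F).

Definition tr (F : set (set X)) (H : set X) : set (set X) :=
  [set A | F A /\ A `&` H !=set0].

(* the cartesian product prod_{A in T} RO(A), encoded as functions that
   pick an element of RO(A) for A in T and are set0 outside T *)
Definition prod_RO (T : set (set X)) : set (set X -> set X) :=
  [set f | forall A, (T A -> RO A (f A)) /\ (~ T A -> f A = set0)].

End Defs.

(* Main.v *)
Require Import Defs.
From HB Require Import structures.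
From mathcomp Require Import all_boot all_order all_algebra.
From mathcomp Require Import all_classical all_reals all_analysis.

Local Open Scope classical_set_scope.

Section Helpers.
Context {X : topologicalType}.
Implicit Types A B G U W : set X.

Local Notation icl A := (interior (closure A)).

Lemma open_icl B : open B -> B `<=` icl B.
Proof. by move=> oB; rewrite -open_subsetE //; exact: subset_closure. Qed.

Lemma icl_mono {A B} : A `<=` B -> icl A `<=` icl B.
Proof. by move=> AB; apply: interiorS; apply: closureS. Qed.

Lemma icl_idem A : icl (icl A) = icl A.
Proof. exact: (@interior_closure_idem X A). Qed.

Lemma closure_idem A : closure (closure A) = closure A.
Proof. by rewrite -(proj1 (closure_id _) (@closed_closure _ A)). Qed.

Lemma open_closureI A U : open A -> A `&` closure U `<=` closure (A `&` U).
Proof.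
move=> oA x [Ax clUx] N Nx.
have AN : nbhs x (A `&` N).
  apply: filterI => //; apply: open_nbhs_nbhs; by split.
have [y [Uy [Ay Ny]]] := clUx _ AN.
by exists y.
Qed.

Lemma ROE G B : open G -> (RO G B <-> B = G `&` icl B).
Proof.
move=> oG.
have E : rel_interior G (rel_closure G B) = G `&` icl B.
  apply/seteqP; split => x.
    move=> [Gx [V [oV Vx VG]]]; split => //.
    rewrite /interior nbhsE; exists (V `&` G); first by split => //; exact: openI.
    by move=> y /VG [].
  move=> [Gx]; rewrite /interior nbhsE => -[V [oV Vx] Vcl].
  split => //; exists V; split => // y [Vy Gy]; split => //; exact: Vcl.
rewrite /RO /= E; split; first by case.
by move=> BE; split => //; rewrite BE; apply: subIsetl.
Qed.

Lemma RO_sub {G B} : RO G B -> B `<=` G.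
Proof. by case. Qed.

Lemma RO_open {G B} : open G -> RO G B -> open B.
Proof.
move=> oG /(ROE _ _ oG) ->; apply: openI => //; exact: open_interior.
Qed.

Lemma ROTE B : RO setT B <-> B = icl B.
Proof. by rewrite ROE ?setTI //; exact: openT. Qed.

Lemma RO_icl G U : open G -> RO G (G `&` icl U).
Proof.
move=> oG; apply/ROE => //; apply/seteqP; split.
  move=> x [Gx iclx]; split => //; apply: open_icl => //.
  apply: openI => //; exact: open_interior.
move=> x [Gx]; move/(icl_mono (@subIsetr _ G (icl U))); rewrite icl_idem.
by move=> h; split.
Qed.

Lemma RO_self G : open G -> RO G G.
Proof.
move=> oG; apply/ROE => //; apply/seteqP; split => x.
  by move=> Gx; split => //; exact: open_icl.
by case.
Qed.

Lemma RO_set0 G : open G -> RO G set0.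
Proof.
move=> oG; apply/ROE => //; by rewrite closure0 interior0 setI0.
Qed.

Lemma RO_trans W B C : open W -> RO W B -> RO B C -> RO W C.
Proof.
move=> oW WB BC; have oB := RO_open oW WB.
move/(ROE _ _ oB): BC => CE; move/(ROE _ _ oW): WB => BE.
have CB : C `<=` B by rewrite CE; apply: subIsetl.
apply/ROE => //; apply/seteqP; split => x.
  move=> Cx; split; first by have := CB _ Cx; rewrite BE => -[].
  by move: Cx; rewrite {1}CE => -[].
move=> [Wx iCx]; rewrite CE; split => //.
rewrite BE; split => //; exact: (icl_mono CB).
Qed.

Lemma RO_inter G A B : open G -> open A -> RO G B -> RO (A `&` G) (B `&` A).
Proof.
move=> oG oA GB; have oB := RO_open oG GB.
move/(ROE _ _ oG): (GB) => BE.
have oAG : open (A `&` G) by exact: openI.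
apply/ROE => //; apply/seteqP; split => x.
  move=> [Bx Ax]; split; first by split => //; exact: RO_sub GB _ Bx.
  by apply: open_icl; [exact: openI|].
move=> [[Ax Gx] ix]; split => //; rewrite BE; split => //.
exact: (icl_mono (@subIsetl _ B A)).
Qed.

Lemma RO_subT W B : open W -> RO W B -> RO setT W -> RO setT B.
Proof.
move=> oW WB /ROTE WE; apply/ROTE; move/(ROE _ _ oW): (WB) => BE.
apply/seteqP; split; first by apply: open_icl; exact: RO_open WB.
move=> x ix; rewrite BE; split => //; rewrite WE.
apply: (icl_mono (RO_sub WB)) ix.
Qed.

Lemma closure_dense B D : open B -> closure D = setT ->
  closure B = closure (B `&` D).
Proof.
move=> oB DT; apply/seteqP; split; last by apply: closureS; apply: subIsetl.
rewrite -[X in _ `<=` X]closure_idem; apply: closureS => x Bx.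
by apply: open_closureI => //; split => //; rewrite DT.
Qed.

End Helpers.
Arguments closure_dense {X B D}.
Arguments RO_inter {X G A B}.
Arguments RO_self {X G}.
Arguments RO_set0 {X G}.
Arguments RO_trans {X W B C}.
Arguments RO_subT {X W B}.

Lemma inj_card_leP {T} {U : pointedType} (A : set T) (B : set U) (f : T -> U) :
  set_fun A B f -> set_inj A f -> (A #<= B)%card.
Proof. by move=> ff fi; apply/pcard_leP; apply/injfunPex; exists f. Qed.

Section Homog.
Context {X : topologicalType}.
Local Notation icl A := (interior (closure A)).

Lemma exists_homog (W0 : set X) : RO setT W0 -> W0 !=set0 ->
  exists A, [/\ A !=set0, RO setT A, rho_homogeneous A & A `<=` W0].
Proof.
move=> W0RO W0n.
pose Phi := [set W : set X | [/\ RO setT W, W !=set0 & W `<=` W0]].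
have PhiW0 : Phi W0 by split.
have oPhi W : Phi W -> open W.
  by case=> /ROTE -> _ _; exact: open_interior.
pose P := [set G : set (set X -> set X) |
  (forall t, G t -> forall W, Phi W -> RO W (t W)) /\
  (forall t1 t2, G t1 -> G t2 -> t1 <> t2 -> forall W, Phi W -> t1 W <> t2 W)].
have [G [[G1 G2] Gmax]] : exists A, P A /\ forall B, A `<` B -> ~ P B.
  apply: Zorn_bigcup => F FP Ftot; split.
    by move=> t [G0 FG0 G0t]; have [h _] := FP _ FG0; exact: h.
  move=> t1 t2 [Ga FGa Gat] [Gb FGb Gbt].
  have [ab|ba] := Ftot _ _ FGa FGb.
    by have [_ h] := FP _ FGb; apply: h => //; exact: ab.
  by have [_ h] := FP _ FGa; apply: h => //; exact: ba.
have [W [PhiW Wsurj]] : exists W, Phi W /\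
    forall s, RO W s -> exists t, G t /\ t W = s.
  apply: contrapT => hn.
  have hc W : exists s, Phi W -> RO W s /\ forall t, G t -> t W <> s.
    have [PW|nPW] := pselect (Phi W); last by exists set0.
    have : ~ (forall s, RO W s -> exists t, G t /\ t W = s).
      by move=> h; apply: hn; exists W.
    move=> /existsNP [s /not_implyP [sRO /forallNP hs]].
    exists s => _; split => // t Gt tWs; apply: (hs t); by split.
  have [t0 t0P] := choice hc.
  apply: (Gmax (G `|` [set t0])).
    split; first by move=> t Gt; left.
    move=> sub; have Gt0 : G t0 by apply: sub; right.
    by have [_ /(_ t0 Gt0)] := t0P _ PhiW0.
  split.
    by move=> t [Gt|->] W' PW'; [exact: G1|have [] := t0P _ PW'].
  move=> t1 t2 [Gt1|->] [Gt2|->] neq W' PW'.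
  - exact: G2.
  - by have [_ /(_ t1 Gt1)] := t0P _ PW'.
  - by have [_ /(_ t2 Gt2)] := t0P _ PW'; apply: contra_not => ->.
  - by [].
have oW := oPhi _ PhiW.
have hs s : exists t, RO W s -> G t /\ t W = s.
  have [Hs|nHs] := pselect (RO W s); last by exists point => /nHs.
  by have [t tP] := Wsurj s Hs; exists t.
have [h hP] := choice hs.
have minW W' : Phi W' -> (RO W #<= RO W')%card.
  move=> PW'; apply: (@inj_card_leP _ _ _ _ (fun s => h s W')).
    by move=> s Hs; have [Gh _] := hP s Hs; exact: G1.
  move=> s1 s2 /set_mem H1 /set_mem H2 /= E.
  have [Gh1 E1] := hP s1 H1; have [Gh2 E2] := hP s2 H2.
  have [heq|hne] := pselect (h s1 = h s2).
    by rewrite -E1 -E2 heq.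
  by exfalso; exact: (G2 _ _ Gh1 Gh2 hne _ PW').
exists W; case: PhiW => WRO Wn WW0; split => //.
move=> B WB Bn; rewrite card_eq_le; apply/andP; split.
  by apply: subset_card_le => C BC; exact: RO_trans WB BC.
apply: minW; split => //; first exact: RO_subT WB WRO.
by move=> x /(RO_sub WB) /WW0.
Qed.
End Homog.

Section Dense.
Context {X : topologicalType}.
Local Notation icl A := (interior (closure A)).

Lemma AX_open (AX : set (set X)) A : admissible_family AX -> AX A -> open A.
Proof. by move=> [_ h] /h [_ /ROTE -> _]; exact: open_interior. Qed.

Lemma AX_disj (AX : set (set X)) A A' : admissible_family AX -> AX A -> AX A' ->
  A <> A' -> A `&` A' = set0.
Proof.
move=> [sd _] HA HA' ne; apply/seteqP; split => // x [Ax A'x].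
by rewrite -(sd _ _ HA HA' ne); split; apply: subset_closure.
Qed.

Lemma dense_AX (AX : set (set X)) : regular_space X ->
  maximal_admissible_family AX -> closure (\bigcup_(A in AX) A) = setT.
Proof.
move=> reg [adm maxAX]; set D := \bigcup_(A in AX) A.
apply/seteqP; split => // x _; apply: contrapT => nclx.
have [N [Nx DN]] : exists N, nbhs x N /\ ~ (D `&` N !=set0).
  apply: contrapT => hn; apply: nclx => N Nx.
  by apply: contrapT => h; apply: hn; exists N.
set U := interior N.
have oU : open U by exact: open_interior.
have Ux : nbhs x U by exact: nbhs_interior.
have DU : forall y, D y -> U y -> False.
  by move=> y Dy /interior_subset Ny; apply: DN; exists y.
have [V Vx clVU] := reg x U Ux.
set W0 := icl (interior V).
have W0RO : RO setT W0 by apply/ROTE; rewrite icl_idem.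
have W0x : W0 x.
  by apply: open_icl; [exact: open_interior|exact: Vx].
have clW0 : closure W0 `<=` U.
  move=> y /(closureS (@interior_subset _ (closure (interior V)))).
  rewrite closure_idem => /(closureS (@interior_subset _ V)).
  by move=> /clVU.
have [A [An ARO Ahom AW0]] := @exists_homog X W0 W0RO (ex_intro _ x W0x).
have clAU : closure A `<=` U by move=> y /(closureS AW0) /clW0.
pose F' := AX `|` [set A].
have admF' : admissible_family F'.
  split; last first.
    by move=> B [/(proj2 adm)//|->].
  have key A' : AX A' -> closure A `&` closure A' = set0.
    move=> HA'; apply/seteqP; split => // y [/clAU Uy clA'y].
    have [z [A'z Uz]] : A' `&` U !=set0.
      by apply: clA'y; apply: open_nbhs_nbhs; split.
    by apply: (DU z) => //; exists A'.
  move=> E0 E1 [H0|->] [H1|->] ne.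
  - exact: (proj1 adm).
  - by rewrite setIC; exact: key.
  - exact: key.
  - by [].
have : F' = AX by apply: maxAX => // B HB; left.
move=> FE; have : AX A by rewrite -FE; right.
move=> HA; have [a Aa] := An.
by apply: (DU a); [exists A|apply: clAU; exact: subset_closure].
Qed.

End Dense.

Local Notation icl A := (interior (closure A)).

Theorem lemma5 (X : topologicalType) (AX : set (set X)) :
  regular_space X ->
  maximal_admissible_family AX ->
  forall H : set X, RO setT H ->
    [/\ (RO H #= prod_RO (tr AX H))%card,
        ([set S : set (set X) | S `<=` tr AX H] #<= RO H)%card
      & ([set B | RO setT B /\ tr AX B `<=` tr AX H] #<= RO H)%card].
Proof.
move=> reg maxAX H HRO.
have adm := proj1 maxAX.
set D := \bigcup_(A in AX) A.
have DT : closure D = setT := @dense_AX X AX reg maxAX.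
set T := tr AX H.
have oH : open H by move/ROTE: HRO => ->; exact: open_interior.
have oA A : AX A -> open A := @AX_open X AX A adm.
pose phi (B : set X) := fun A => [set x | T A /\ B x /\ A x].
have phiT B A : T A -> phi B A = B `&` A.
  by move=> TA; apply/seteqP; split => x; [case=> _ []|case=> ? ?].
have phiN B A : ~ T A -> phi B A = set0.
  by move=> nTA; apply/seteqP; split => x // [].
have core B1 B2 : open B1 -> open B2 -> (forall x, B1 x -> D x -> B2 x) ->
    (forall x, B2 x -> D x -> B1 x) -> closure B1 = closure B2.
  move=> o1 o2 h12 h21.
  rewrite (closure_dense o1 DT) (closure_dense o2 DT); congr closure.
  by apply/seteqP; split => x [? ?]; split => //; auto.
pose P' := [set f : set X -> set X | forall A,
  (T A -> RO (A `&` H) (f A)) /\ (~ T A -> f A = set0)].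
have E1 : (RO H #= P')%card.
  apply/card_set_bijP; exists phi; split.
  - move=> B HB A; split => [TA|nTA]; last exact: phiN.
    by rewrite phiT //; apply: RO_inter => //; exact: oA (proj1 TA).
  - move=> B1 B2 /set_mem H1 /set_mem H2 E.
    have hx Ba Bb : phi Ba = phi Bb -> RO H Ba -> forall x, Ba x -> D x -> Bb x.
      move=> Eab HBa x Bax [A AXA Ax].
      have TA : T A by split => //; exists x; split => //; exact: RO_sub HBa _ Bax.
      have : phi Ba A x by split.
      by rewrite Eab => -[_ []].
    have cl := core _ _ (RO_open oH H1) (RO_open oH H2) (hx _ _ E H1) (hx _ _ (esym E) H2).
    have e1 : B1 = H `&` icl B1 by apply/ROE.
    have e2 : B2 = H `&` icl B2 by apply/ROE.
    by rewrite e1 e2 cl.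
  - move=> f Pf; exists (H `&` icl (\bigcup_(A in T) f A)); first exact: RO_icl.
    apply: funext => A; have [TA|nTA] := pselect (T A); last first.
      by rewrite phiN // (proj2 (Pf A) nTA).
    rewrite phiT //; have fRO := proj1 (Pf A) TA.
    have oAA := oA _ (proj1 TA).
    have fE : f A = (A `&` H) `&` icl (f A) by apply/ROE => //; exact: openI.
    apply/seteqP; split => x.
    + move=> [[Hx ix] Ax]; rewrite fE; split => //.
      have sub : A `&` icl (\bigcup_(A in T) f A) `<=` closure (f A).
        move=> y [Ay iy].
        have : closure (A `&` \bigcup_(A in T) f A) y.
          by apply: open_closureI => //; split => //; exact: interior_subset iy.
        apply: closureS => z [Az [A' TA' fz]].
        have [eA|ne] := pselect (A' = A); first by rewrite -eA.
        have [A'z _] := RO_sub (proj1 (Pf A') TA') _ fz.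
        have := @AX_disj X AX _ _ adm (proj1 TA) (proj1 TA') (nesym ne).
        by move/seteqP => [/(_ z (conj Az A'z))].
      move: sub; rewrite open_subsetE; first by apply; split.
      by apply: openI => //; exact: open_interior.
    + move=> fx; have := fx; rewrite {1}fE => -[[Ax Hx] ifx]; split => //; split => //.
      have sfA : f A `<=` \bigcup_(A in T) f A by move=> z fz; exists A.
      exact: (icl_mono sfA).
have E2 : (P' #= prod_RO T)%card.
  have hom A : T A -> (RO (A `&` H) #= RO A)%card.
    move=> [AXA AHn]; have [_ _ Ahom] := proj2 adm A AXA.
    apply: Ahom => //.
    by have := RO_inter openT (oA _ AXA) HRO; rewrite setIT setIC.
  have hg A : exists g, T A -> set_bij (RO (A `&` H)) (RO A) g.
    have [TA|nTA] := pselect (T A); last by exists id.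
    by have /card_set_bijP [g gb] := hom A TA; exists g.
  have [g gP] := choice hg.
  have FT (f : set X -> set X) A : T A -> [set x | T A /\ g A (f A) x] = g A (f A).
    by move=> TA; apply/seteqP; split => x; [case|].
  have FN (f : set X -> set X) A : ~ T A -> [set x | T A /\ g A (f A) x] = set0.
    by move=> nTA; apply/seteqP; split => x // [].
  apply/card_set_bijP; exists (fun f A => [set x | T A /\ g A (f A) x]); split.
  - move=> f Pf A; split => [TA|nTA]; last exact: FN.
    rewrite FT //; have [gf _ _] := gP A TA; exact: gf (proj1 (Pf A) TA).
  - move=> f1 f2 /set_mem P1 /set_mem P2 /= E; apply: funext => A.
    have [TA|nTA] := pselect (T A); last first.
      by rewrite (proj2 (P1 A) nTA) (proj2 (P2 A) nTA).
    have [_ gi _] := gP A TA.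
    apply: gi; rewrite ?inE; [exact: (proj1 (P1 A) TA)|exact: (proj1 (P2 A) TA)|].
    move: E => /(congr1 (fun F => F A)) /=.
    by rewrite !FT.
  - move=> p pP.
    have hy A : exists y, T A -> RO (A `&` H) y /\ g A y = p A.
      have [TA|nTA] := pselect (T A); last by exists set0.
      have [_ _ gs] := gP A TA.
      by have [y yR gy] := gs _ (proj1 (pP A) TA); exists y.
    have [k kP] := choice hy.
    have kT A : T A -> [set x | T A /\ k A x] = k A.
      by move=> TA; apply/seteqP; split => x; [case|].
    exists (fun A => [set x | T A /\ k A x]).
      move=> A; split => [TA|nTA]; first by rewrite kT //; exact: (proj1 (kP A TA)).
      by apply/seteqP; split => x // [].
    apply: funext => A /=; have [TA|nTA] := pselect (T A).
      by rewrite (kT A TA) (FT k A TA); exact: (proj2 (kP A TA)).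
    by rewrite (proj2 (pP A) nTA); apply/seteqP; split => x // [].
have E : (RO H #= prod_RO T)%card := card_eq_trans E1 E2.
have EL : (prod_RO T #<= RO H)%card.
  by have := card_esym E; rewrite card_eq_le => /andP[].
split => //.
- apply: (card_le_trans _ EL).
  apply: (@inj_card_leP _ _ _ _ (fun S A => [set x | S A /\ A x])).
  + move=> S ST A; split => [TA|nTA].
      have [SA|nSA] := pselect (S A).
        have -> : [set x | S A /\ A x] = A by apply/seteqP; split => x; [case|].
        exact: RO_self (oA _ (proj1 TA)).
      have -> : [set x | S A /\ A x] = set0 by apply/seteqP; split => x // [].
      exact: RO_set0 (oA _ (proj1 TA)).
    by apply/seteqP; split => x // [/ST].
  + move=> S1 S2 /set_mem H1 /set_mem H2 /= E'.
    have h Sa Sb : (fun A => [set x | Sa A /\ A x]) = (fun A => [set x | Sb A /\ A x]) ->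
        Sa `<=` T -> forall A, Sa A -> Sb A.
      move=> Eab Ha A SA; have [a [Aa Ha']] := proj2 (Ha _ SA).
      have EA : (Sa A /\ A a) = (Sb A /\ A a) := congr1 (fun F => F A a) Eab.
      by have [] : Sb A /\ A a by rewrite -EA.
    apply: funext => A; apply: propext; split; [exact: h E' H1 A|exact: h (esym E') H2 A].
- apply: (card_le_trans _ EL).
  apply: (@inj_card_leP _ _ _ _ phi).
  + move=> B [BRO trB] A; split => [TA|nTA]; last exact: phiN.
    rewrite phiT //; have := RO_inter openT (oA _ (proj1 TA)) BRO.
    by rewrite setIT.
  + move=> B1 B2 /set_mem [R1 t1] /set_mem [R2 t2] E3.
    have hx Ba Bb : phi Ba = phi Bb -> tr AX Ba `<=` T -> forall x, Ba x -> D x -> Bb x.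
      move=> Eab tab x Bax [A AXA Ax].
      have TA : T A by apply: tab; split => //; exists x.
      have : phi Ba A x by split.
      by rewrite Eab => -[_ []].
    have o1 : open B1 by move/ROTE: R1 => ->; exact: open_interior.
    have o2 : open B2 by move/ROTE: R2 => ->; exact: open_interior.
    have cl := core _ _ o1 o2 (hx _ _ E3 t1) (hx _ _ (esym E3) t2).
    have e1 : B1 = icl B1 by apply/ROTE.
    have e2 : B2 = icl B2 by apply/ROTE.
    by rewrite e1 e2 cl.
Qed.
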